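(* Let $(X,\mathcal{X},\mu)$ be a probability space, $(Y,\mathcal{Y})$ a measurable space, $f\colon X\to Y$ a measurable function, and $\mu_f=\mu\circ\mathit{pre}_f\colon\mathcal{Y}\to[0,1]$ the output probability measure. Let $\mathit{pre}^\sharp_f\colon\wp(Y)\to\wp(X)$ satisfy $\mathit{pre}_f(A)\subseteq\mathit{pre}^\sharp_f(A)$ for all $A\subseteq Y$, and let $\uparrow\colon\wp(X)\to\mathcal{X}$ be an abstraction. Define $\mu^\sharp_f=\mu\circ\uparrow\circ\,\mathit{pre}^\sharp_f$, $\mathit{pre}'^\flat_f(A)=X\setminus\uparrow\big(\mathit{pre}^\sharp_f(Y\setminus A)\big)$, and $\mu^\flat_f=\mu\circ\mathit{pre}'^\flat_f$. Then for all $A\in\mathcal{Y}$, $\mu^\flat_f(A)\le\mu_f(A)$ and $\mu^\flat_f(A)=1-\mu^\sharp_f(Y\setminus A)$. Furthermore, if $\mathit{pre}^\sharp_f$ and $\uparrow$ are monotone, then $\mu^\flat_f$ is monotone.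
   Context: For $f\colon X\to Y$, $\mathit{pre}_f(B)=\{x\in X\mid f(x)\in B\}$; $f$ is measurable if $\mathit{pre}_f(B)\in\mathcal{X}$ for all $B\in\mathcal{Y}$. Functions are total (every $x\in X$ has an image $f(x)$). An abstraction is a function $\uparrow\colon\wp(X)\to\mathcal{X}$ with $S\subseteq\,\uparrow(S)$ for all $S\subseteq X$. A set function is monotone if $A\subseteq B$ implies $g(A)\subseteq g(B)$ (resp. $g(A)\le g(B)$). *)

(* Defs.v *)
From HB Require Import structures.
From mathcomp Require Import all_boot all_order all_algebra.
From mathcomp Require Import all_classical all_reals all_analysis.
Set Implicit Arguments. Unset Strict Implicit. Unset Printing Implicit Defensive.
Import Order.TTheory GRing.Theory Num.Theory.
Local Open Scope classical_set_scope.
Local Open Scope ring_scope.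

Definition pre (X Y : Type) (f : X -> Y) (B : set Y) : set X := f @^-1` B.

Definition abstraction (d : measure_display) (X : measurableType d)
  (up : set X -> set X) : Prop :=
  (forall S, measurable (up S)) /\ (forall S, S `<=` up S).

Definition mu_sharp (d : measure_display) (X : measurableType d) (Y : Type)
  (R : realType) (mu : set X -> \bar R) (up : set X -> set X)
  (pre_sharp : set Y -> set X) (A : set Y) : \bar R :=
  mu (up (pre_sharp A)).

Definition pre_flat (X Y : Type) (up : set X -> set X)
  (pre_sharp : set Y -> set X) (A : set Y) : set X :=
  ~` up (pre_sharp (~` A)).

Definition mu_flat (d : measure_display) (X : measurableType d) (Y : Type)
  (R : realType) (mu : set X -> \bar R) (up : set X -> set X)
  (pre_sharp : set Y -> set X) (A : set Y) : \bar R :=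
  mu (pre_flat up pre_sharp A).

(* Main.v *)
Require Import Defs.
From HB Require Import structures.
From mathcomp Require Import all_boot all_order all_algebra.
From mathcomp Require Import all_classical all_reals all_analysis.
Import Order.TTheory GRing.Theory Num.Theory.
Local Open Scope classical_set_scope.
Local Open Scope ring_scope.

Theorem theorem2 (d : measure_display) (X : measurableType d)
  (d' : measure_display) (Y : measurableType d') (R : realType)
  (mu : probability X R) (f : X -> Y) (mf : measurable_fun setT f)
  (pre_sharp : set Y -> set X)
  (Hsharp : forall A : set Y, pre f A `<=` pre_sharp A)
  (up : set X -> set X) (Hup : abstraction up) :
  (forall A : set Y, measurable A ->
     (mu_flat mu up pre_sharp A <= mu (pre f A))%E /\
     mu_flat mu up pre_sharp A = (1 - mu_sharp mu up pre_sharp (~` A))%E) /\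
  ((forall A B : set Y, A `<=` B -> pre_sharp A `<=` pre_sharp B) ->
   (forall S T : set X, S `<=` T -> up S `<=` up T) ->
   forall A B : set Y, A `<=` B ->
     (mu_flat mu up pre_sharp A <= mu_flat mu up pre_sharp B)%E).
Proof.
case: Hup => Hm Hext.
split.
- move=> A mA; split.
  + rewrite /mu_flat /pre_flat.
    apply: le_measure; rewrite ?inE.
    * exact: measurableC.
    * have := mf measurableT A mA; by rewrite setTI.
    * move=> x /= Hx; apply: contra_notP Hx => Hfx.
      apply: Hext; apply: Hsharp; exact: Hfx.
  + by rewrite /mu_flat /pre_flat /mu_sharp probability_setC.
- move=> Hps Hu A B AB.
  rewrite /mu_flat /pre_flat.
  apply: le_measure; rewrite ?inE; try exact: measurableC.
  apply: subsetC; apply: Hu; apply: Hps; exact: subsetC.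
Qed.
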